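(* Let $\mathcal{A}$ be a poset such that $\hat{a}=\{b\in\mathcal{A}: b\le a\}$ is finite for every $a\in\mathcal{A}$, and let $(G,F)$ be a functor from $\mathcal{A}$ to $\mathbf{Split}$ (over $\Lambda$-modules, $\Lambda$ a commutative ring). Then $(G,F)$ satisfies the intersection property if and only if $(G,F)$ is decomposable.
   Context: $\Lambda$ is a commutative ring and $\mathbf{Mod}$ the category of $\Lambda$-modules. A functor from a poset $\mathcal{A}$ to $\mathbf{Split}$ is a pair $(G,F)$ where $G:\mathcal{A}\to\mathbf{Mod}$ is a functor (maps $G^b_a:G(b)\to G(a)$ for $b\le a$), $F:\mathcal{A}^{op}\to\mathbf{Mod}$ is a presheaf (maps $F^a_b:F(a)\to F(b)$ for $b\le a$), $G(a)=F(a)$ for all $a$, and $F^a_bG^b_a=\mathrm{id}_{G(b)}$ for all $b\le a$. A morphism $(G,F)\to(G',F')$ is a pair $(\phi,\psi)$ with $\phi:G\to G'$ and $\psi:F'\to F$ natural transformations and $\psi_a\phi_a=\mathrm{id}$ for all $a$; it is an isomorphism if each $\phi_a$ is bijective with $\psi_a=\phi_a^{-1}$. A functor from $\mathcal{A}$ to $\mathbf{Split}(\mathrm{core}\,\mathbf{Mod})$ is such a pair $(G,F)$ in which every $G^b_a$ is an isomorphism (so $F^a_b=(G^b_a)^{-1}$). Intersection property: for $\alpha\in\mathcal{A}$ and $a\le\alpha$ put $\pi^\alpha_a=G^a_\alpha F^\alpha_a$, an idempotent endomorphism of $G(\alpha)$. Let $(s^\alpha_a)_{a\le\alpha}$ be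 the unique family of endomorphisms of $G(\alpha)$ with $\pi^\alpha_a=\sum_{b\le a}s^\alpha_b$ for all $a\le\alpha$ (Möbius inversion on the finite poset $\hat\alpha$). $(G,F)$ satisfies the intersection property if for all $\alpha\in\mathcal{A}$ and all $a,b\le\alpha$: $\pi^\alpha_a\pi^\alpha_b=\sum_{c\le a,\ c\le b}s^\alpha_c$ (when $\mathcal{A}$ is a meet semilattice this reads $\pi^\alpha_a\pi^\alpha_b=\pi^\alpha_{a\wedge b}$). Decomposable: there is a family $((G_c,F_c))_{c\in\mathcal{A}}$ of functors from $\mathcal{A}$ to $\mathbf{Split}(\mathrm{core}\,\mathbf{Mod})$ such that $(G,F)$ is isomorphic to $(S,T)$ where $S(a)=T(a)=\bigoplus_{c\le a}G_c(a)$, for $b\le a$ the map $S^b_a$ sends $(v_c)_{c\le b}$ to $(w_c)_{c\le a}$ with $w_c=(G_c)^b_a(v_c)$ if $c\le b$ and $w_c=0$ otherwise, and $T^a_b$ sends $(w_c)_{c\le a}$ to $((F_c)^a_b(w_c))_{c\le b}$. *)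

(* Defs.v *)
From HB Require Import structures.
From mathcomp Require Import all_boot all_order all_algebra.
Set Implicit Arguments. Unset Strict Implicit. Unset Printing Implicit Defensive.
Import Order.TTheory GRing.Theory.
Local Open Scope ring_scope.
Local Open Scope order_scope.

Section DSum.
Variables (R : comPzRingType) (I : finType) (M : I -> lmodType R).
Definition dsum := {dffun forall i : I, M i}.
HB.instance Definition _ := Choice.on dsum.
Definition dsum_zero : dsum := [ffun i => 0%R].
Definition dsum_add (f g : dsum) : dsum := [ffun i => (f i + g i)%R].
Definition dsum_opp (f : dsum) : dsum := [ffun i => (- f i)%R].
Definition dsum_scale (k : R) (f : dsum) : dsum := [ffun i => k *: f i].
Fact dsum_addA : associative dsum_add.
Proof. by move=> f g h; apply/ffunP=> i; rewrite !ffunE addrA. Qed.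
Fact dsum_addC : commutative dsum_add.
Proof. by move=> f g; apply/ffunP=> i; rewrite !ffunE addrC. Qed.
Fact dsum_add0 : left_id dsum_zero dsum_add.
Proof. by move=> f; apply/ffunP=> i; rewrite !ffunE add0r. Qed.
Fact dsum_addN : left_inverse dsum_zero dsum_opp dsum_add.
Proof. by move=> f; apply/ffunP=> i; rewrite !ffunE addNr. Qed.
HB.instance Definition _ :=
  GRing.isZmodule.Build dsum dsum_addA dsum_addC dsum_add0 dsum_addN.
Fact dsum_scaleA a b v : dsum_scale a (dsum_scale b v) = dsum_scale (a * b) v.
Proof. by apply/ffunP=> i; rewrite !ffunE scalerA. Qed.
Fact dsum_scale1 : left_id 1 dsum_scale.
Proof. by move=> f; apply/ffunP=> i; rewrite !ffunE scale1r. Qed.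
Fact dsum_scaleDr : right_distributive dsum_scale +%R.
Proof. by move=> a f g; apply/ffunP=> i; rewrite !ffunE scalerDr. Qed.
Fact dsum_scaleDl v : {morph dsum_scale^~ v : a b / a + b}.
Proof. by move=> a b; apply/ffunP=> i; rewrite !ffunE scalerDl. Qed.
HB.instance Definition _ :=
  GRing.Zmodule_isLmodule.Build R dsum dsum_scaleA dsum_scale1 dsum_scaleDr
    dsum_scaleDl.
End DSum.

Section Split.
Variables (R : comPzRingType) (d : Order.disp_t) (A : porderType d).

(* Data of a pair (G,F): common objects G(a) = F(a), maps
   sf_G b a = G^b_a : G(b) -> G(a) and sf_F a b = F^a_b : F(a) -> F(b).
   Only the values for b <= a are meaningful (constrained by is_split). *)
Record split_functor := SplitFunctor {
  sf_obj : A -> lmodType R;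
  sf_G : forall b a : A, sf_obj b -> sf_obj a;
  sf_F : forall a b : A, sf_obj a -> sf_obj b }.
End Split.
Arguments SplitFunctor {R d A} sf_obj sf_G sf_F.
Arguments sf_obj {R d A} s a.
Arguments sf_G {R d A} s b a _.
Arguments sf_F {R d A} s a b _.

Section Split2.
Variables (R : comPzRingType) (d : Order.disp_t) (A : porderType d).
Local Notation split_functor := (split_functor R A).

Definition is_split (X : split_functor) : Prop :=
  [/\ forall b a, b <= a -> linear (sf_G X b a),
      forall b a, b <= a -> linear (sf_F X a b),
      (forall a x, sf_G X a a x = x) /\
      (forall c b a, c <= b -> b <= a -> forall x,
          sf_G X c a x = sf_G X b a (sf_G X c b x)),
      (forall a x, sf_F X a a x = x) /\
      (forall a b c, c <= b -> b <= a -> forall x,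
          sf_F X a c x = sf_F X b c (sf_F X a b x))
    & forall b a, b <= a -> forall x, sf_F X a b (sf_G X b a x) = x].

Definition is_core_split (X : split_functor) : Prop :=
  is_split X /\ forall b a, b <= a -> bijective (sf_G X b a).

Definition split_iso (X Y : split_functor) : Prop :=
  exists (phi : forall a, sf_obj X a -> sf_obj Y a)
         (psi : forall a, sf_obj Y a -> sf_obj X a),
  [/\ forall a, linear (phi a),
      forall a, linear (psi a),
      forall b a, b <= a -> forall x, phi a (sf_G X b a x) = sf_G Y b a (phi b x),
      forall b a, b <= a -> forall y, psi b (sf_F Y a b y) = sf_F X a b (psi a y)
    & forall a, cancel (phi a) (psi a) /\ cancel (psi a) (phi a)].

(* Intersection property; hat a enumerates {b | b <= a}                *)
Variable hat : A -> seq A.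

Definition sf_pi (X : split_functor) (al a : A) (x : sf_obj X al) : sf_obj X al :=
  sf_G X a al (sf_F X al a x).

(* For every alpha and the (unique) family (s_a)_{a <= alpha} of
   endomorphisms of G(alpha) with pi_a = sum_{b <= a} s_b, we have
   pi_a pi_b = sum_{c <= a, c <= b} s_c. *)
Definition intersection_property (X : split_functor) : Prop :=
  forall (al : A) (s : A -> sf_obj X al -> sf_obj X al),
    (forall b, b <= al -> linear (s b)) ->
    (forall a, a <= al -> forall x,
        @sf_pi X al a x = (\sum_(b <- hat al | (b <= a)%O) s b x)%R) ->
    forall a b, a <= al -> b <= al -> forall x,
      @sf_pi X al a (@sf_pi X al b x) =
        (\sum_(c <- hat al | (c <= a)%O && (c <= b)%O) s c x)%R.

Definition S_obj (fam : A -> split_functor) (a : A) : lmodType R :=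
  dsum (fun c : seq_sub (hat a) => sf_obj (fam (ssval c)) a).

(* the component v_x of v in S(a) (taken to be 0 if x \notin hat a) *)
Definition dget (fam : A -> split_functor) (a : A) (v : S_obj fam a) (x : A)
  : sf_obj (fam x) a :=
  (if x \in hat a as bb return ((x \in hat a) = bb -> sf_obj (fam x) a)
   then fun H => v (@SeqSub _ (hat a) x H) else fun _ => 0%R) (erefl (x \in hat a)).
Arguments dget : clear implicits.

Definition S_map (fam : A -> split_functor) (b a : A) (v : S_obj fam b)
  : S_obj fam a :=
  [ffun c : seq_sub (hat a) =>
     if ssval c <= b then sf_G (fam (ssval c)) b a (dget fam b v (ssval c)) else 0%R].

Definition T_map (fam : A -> split_functor) (a b : A) (w : S_obj fam a)
  : S_obj fam b :=
  [ffun c : seq_sub (hat b) => sf_F (fam (ssval c)) a b (dget fam a w (ssval c))].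

Arguments S_map : clear implicits.
Arguments T_map : clear implicits.

Definition ST_functor (fam : A -> split_functor) : split_functor :=
  SplitFunctor (S_obj fam) (S_map fam) (T_map fam).

Definition decomposable (X : split_functor) : Prop :=
  exists fam : A -> split_functor,
    (forall c, is_core_split (fam c)) /\ split_iso X (ST_functor fam).

End Split2.

(* Main.v *)
Require Import Defs.
From HB Require Import structures.
From mathcomp Require Import all_boot all_order all_algebra.
Import Order.TTheory.
Import GRing.Theory.
Set Implicit Arguments. Unset Strict Implicit. Unset Printing Implicit Defensive.
Local Open Scope ring_scope.
Local Open Scope order_scope.

Section Lin.
Variables (R : comPzRingType) (U V : lmodType R) (f : U -> V) (Hf : linear f).
Lemma lin0 : f 0 = 0.
Proof.
have H := Hf 1 0 0; rewrite !scale1r addr0 in H.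
by apply: (addrI (f 0)); rewrite addr0 -H.
Qed.
Lemma linD x y : f (x + y) = f x + f y.
Proof. by have := Hf 1 x y; rewrite !scale1r. Qed.
Lemma linZ k x : f (k *: x) = k *: f x.
Proof. by have := Hf k x 0; rewrite !addr0 lin0 addr0. Qed.
Lemma linN x : f (- x) = - f x.
Proof. by rewrite -scaleN1r linZ scaleN1r. Qed.
Lemma linB x y : f (x - y) = f x - f y.
Proof. by rewrite linD linN. Qed.
Lemma lin_sum (I : Type) (l : seq I) (P : pred I) (g : I -> U) :
  f (\sum_(i <- l | P i) g i) = \sum_(i <- l | P i) f (g i).
Proof. exact: (big_morph f linD lin0). Qed.
End Lin.

Lemma lin_id (R : comPzRingType) (U : lmodType R) : linear (@id U).
Proof. by []. Qed.

Lemma lin_comp (R : comPzRingType) (U V W : lmodType R) (f : U -> V) (g : V -> W) :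
  linear f -> linear g -> linear (fun x => g (f x)).
Proof. by move=> Hf Hg k x y; rewrite Hf Hg. Qed.

Section Big.
Variables (V : zmodType) (T : eqType).
Lemma sum_list_eq (l1 l2 : seq T) (P : pred T) (f : T -> V) :
  uniq l1 -> uniq l2 -> (forall x, P x -> (x \in l1) = (x \in l2)) ->
  \sum_(x <- l1 | P x) f x = \sum_(x <- l2 | P x) f x.
Proof.
move=> u1 u2 H; rewrite -big_filter -[RHS]big_filter; apply: perm_big.
apply: uniq_perm; rewrite ?filter_uniq // => x; rewrite !mem_filter.
by case Px: (P x) => //=; rewrite H.
Qed.

Lemma sum_delta (l : seq T) (P : pred T) (c : T) (f : T -> V) :
  uniq l ->
  \sum_(x <- l | P x) (if x == c then f x else 0) =
  if (c \in l) && P c then f c else 0.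
Proof.
move=> ul; rewrite -big_filter.
case H: ((c \in l) && P c).
  have cin : c \in [seq x <- l | P x] by rewrite mem_filter andbC.
  rewrite (bigD1_seq c) ?filter_uniq //= eqxx big1 ?addr0 // => x /negbTE ->.
  by [].
rewrite big1_seq // => x /andP[_]; rewrite mem_filter => /andP[Px xl].
case: eqP => // E; move: H; by rewrite -E xl Px.
Qed.
End Big.

Section Mob.
Variables (R : comPzRingType) (d : Order.disp_t) (A : porderType d)
    (hat : A -> seq A)
    (hat_uniq : forall a : A, uniq (hat a))
    (hat_spec : forall a b : A, (b \in hat a) = (b <= a))
    (X : split_functor R A) (HX : is_split X).

Local Notation G := (sf_G X).
Local Notation F := (sf_F X).
Local Notation pi al := (@sf_pi _ _ _ X al).

Lemma HGl b a : b <= a -> linear (G b a). Proof. by case: HX => H _ _ _ _; apply: H. Qed.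
Lemma HFl b a : b <= a -> linear (F a b). Proof. by case: HX => _ H _ _ _; apply: H. Qed.
Lemma HG1 a x : G a a x = x. Proof. by case: HX => _ _ [H _] _ _; apply: H. Qed.
Lemma HGc c b a : c <= b -> b <= a -> forall x, G c a x = G b a (G c b x).
Proof. by case: HX => _ _ [_ H] _ _; apply: H. Qed.
Lemma HF1 a x : F a a x = x. Proof. by case: HX => _ _ _ [H _] _; apply: H. Qed.
Lemma HFc a b c : c <= b -> b <= a -> forall x, F a c x = F b c (F a b x).
Proof. by case: HX => _ _ _ [_ H] _; apply: H. Qed.
Lemma HFG b a : b <= a -> forall x, F a b (G b a x) = x.
Proof. by case: HX => _ _ _ _ H; apply: H. Qed.

Lemma pi_lin al a : a <= al -> linear (pi al a).
Proof. by move=> h; apply: lin_comp; [apply: HFl | apply: HGl]. Qed.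

Lemma size_hat_lt b a : b < a -> (size (hat b) < size (hat a))%N.
Proof.
move=> ba; have u : uniq (a :: hat b).
  rewrite /= hat_uniq andbT hat_spec; apply/negP => ab.
  by move: (ba); rewrite lt_neqAle => /andP[/negP + _]; apply; apply/eqP/le_anti; rewrite ab (ltW ba).
have := uniq_leq_size u; apply => y; rewrite inE => /orP[/eqP -> | ]; rewrite !hat_spec //.
by move=> yb; apply: le_trans yb (ltW ba).
Qed.

Fixpoint mob (al : A) (n : nat) (a : A) (x : sf_obj X al) : sf_obj X al :=
  if n is n'.+1 then pi al a x - \sum_(b <- hat al | b < a) mob n' b x else 0.

Lemma mob_stable al n : forall m a x, (size (hat a) < n)%N -> (size (hat a) < m)%N ->
  mob n a x = mob (al:=al) m a x.
Proof.
elim: n => [//|n IH] [//|m] a x hn hm /=; congr (_ - _).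
rewrite big_seq_cond [RHS]big_seq_cond; apply: eq_bigr => b /andP[_ ba].
have := size_hat_lt ba => hb; apply: IH; apply: leq_trans hb _; by rewrite -ltnS.
Qed.

Definition smob al a x := mob (al:=al) (size (hat a)).+1 a x.

Arguments smob : simpl never.

Lemma s_rec al a x : smob a x = pi al a x - \sum_(b <- hat al | b < a) smob b x.
Proof.
rewrite {1}/smob /=; congr (_ - _); apply: eq_bigr => b ba.
by rewrite /smob; apply: mob_stable => //; apply: size_hat_lt.
Qed.

Lemma split_le (V : zmodType) al a (f : A -> V) : a <= al ->
  \sum_(b <- hat al | b <= a) f b = f a + \sum_(b <- hat al | b < a) f b.
Proof.
move=> aal; rewrite -big_filter (bigD1_seq a) ?mem_filter ?lexx ?hat_spec ?filter_uniq //=.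
by rewrite big_filter_cond; congr (_ + _); apply: eq_bigl => b; rewrite lt_neqAle andbC.
Qed.

Lemma s_sum al a x : a <= al -> pi al a x = \sum_(b <- hat al | b <= a) smob b x.
Proof. by move=> h; rewrite (split_le _ h) s_rec subrK. Qed.

Lemma s_unique al c (t : A -> sf_obj X al -> sf_obj X al) x : c <= al ->
  (forall b, b <= c -> pi al b x = \sum_(b' <- hat al | b' <= b) t b' x) ->
  forall b, b <= c -> t b x = smob b x.
Proof.
move=> cal H b; move: {2}(size (hat b)).+1 (ltnSn (size (hat b))) => n.
elim: n b => [//|n IH] b hn bc.
have bal := le_trans bc cal.
have -> : t b x = pi al b x - \sum_(b' <- hat al | b' < b) t b' x.
  by rewrite (H b bc) (split_le _ bal) addrK.
rewrite s_rec; congr (_ - _).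
rewrite big_seq_cond [RHS]big_seq_cond; apply: eq_bigr => b' /andP[_ b'b].
apply: IH; last exact: le_trans (ltW b'b) bc.
by apply: leq_trans (size_hat_lt b'b) _; rewrite -ltnS.
Qed.

Lemma mob_lin al n : forall a, a <= al -> linear (mob (al:=al) n a).
Proof.
elim: n => [|n IH] a aal k u v /=; first by rewrite scaler0 addr0.
rewrite (pi_lin aal).
rewrite (@eq_bigr _ _ _ _ _ _ _ (fun b => k *: mob n b u + mob n b v)); last first.
  by move=> b ba; rewrite (IH b (le_trans (ltW ba) aal)).
by rewrite big_split /= -scaler_sumr scalerBr opprD addrACA.
Qed.

Lemma s_lin al a : a <= al -> linear (smob (al:=al) a).
Proof. exact: mob_lin. Qed.

End Mob.

Section Dget.
Variables (R : comPzRingType) (d : Order.disp_t) (A : porderType d)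
    (hat : A -> seq A) (fam : A -> split_functor R A).

Lemma dget_in a (v : S_obj hat fam a) x (H : x \in hat a) : dget v x = v (SeqSub H).
Proof.
rewrite /dget. move: (erefl (x \in hat a)).
case: {2 3}(x \in hat a) => e; last by move: (e); rewrite H.
by rewrite (bool_irrelevance e H).
Qed.

Lemma dget_out a (v : S_obj hat fam a) x : x \notin hat a -> dget v x = 0.
Proof.
move=> H; rewrite /dget. move: (erefl (x \in hat a)).
by case: {2 3}(x \in hat a) => e //; move: H; rewrite e.
Qed.

Lemma dget_val a (v : S_obj hat fam a) (c : seq_sub (hat a)) : dget v (ssval c) = v c.
Proof. by case: c => x H; apply: dget_in. Qed.

Lemma dget_lin a x : linear (fun v : S_obj hat fam a => dget v x).
Proof.
move=> k u v; case H: (x \in hat a); last by rewrite !dget_out ?H // scaler0 addr0.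
by rewrite !(dget_in _ H) !ffunE.
Qed.
Definition Pm al (Q : pred A) (v : S_obj hat fam al) : S_obj hat fam al :=
  [ffun c => if Q (ssval c) then v c else 0].
Definition Em al a (v : S_obj hat fam al) : S_obj hat fam al :=
  [ffun c => if ssval c == a then v c else 0].
End Dget.

Section DSumL.
Variables (R : comPzRingType) (I : finType) (M : I -> lmodType R).
Lemma dsumD (f g : dsum M) i : (f + g) i = f i + g i.
Proof. by rewrite ffunE. Qed.
Lemma dsumZ k (f : dsum M) i : (k *: f) i = k *: f i.
Proof. by rewrite ffunE. Qed.
Lemma dsum0 i : (0 : dsum M) i = 0.
Proof. by rewrite ffunE. Qed.
Lemma dsum_sum (J : Type) (l : seq J) (P : pred J) (f : J -> dsum M) i :
  (\sum_(j <- l | P j) f j) i = \sum_(j <- l | P j) f j i.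
Proof.
elim: l => [|j l IH]; first by rewrite !big_nil dsum0.
by rewrite !big_cons; case: (P j); rewrite ?dsumD IH.
Qed.
End DSumL.


Section Dec.
Variables (R : comPzRingType) (d : Order.disp_t) (A : porderType d)
    (hat : A -> seq A)
    (hat_uniq : forall a : A, uniq (hat a))
    (hat_spec : forall a b : A, (b \in hat a) = (b <= a))
    (X : split_functor R A) (HX : is_split X).

Local Notation G := (sf_G X).
Local Notation F := (sf_F X).
Local Notation pi al := (@sf_pi _ _ _ X al).

Lemma coreGF (Y : split_functor R A) : is_core_split Y ->
  forall b a, b <= a -> forall z, sf_G Y b a (sf_F Y a b z) = z.
Proof.
move=> [HY Hb] b a ba z; have [g gK Kg] := Hb b a ba.
by rewrite -(Kg z) (HFG HY ba).
Qed.

Lemma ST_SF (fam : A -> split_functor R A) (Hfam : forall c, is_core_split (fam c)) al a (v : S_obj hat fam al) :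
  a <= al -> @S_map _ _ _ hat fam a al (@T_map _ _ _ hat fam al a v) =
    @Pm _ _ _ hat fam al (fun c => c <= a) v.
Proof.
move=> aal; apply/ffunP => c; rewrite /S_map !ffunE; case: ifP => // ca.
have H : ssval c \in hat a by rewrite hat_spec.
by rewrite (dget_in _ H) ffunE dget_val coreGF.
Qed.

Lemma dec_IP (fam : A -> split_functor R A) : (forall c, is_core_split (fam c)) ->
  split_iso X (ST_functor hat fam) -> intersection_property hat X.
Proof.
move=> Hfam [phi [psi [phil psil phiN psiN inv]]].
move=> al s slin ssum a b aal bal x.
pose P a (v : S_obj hat fam al) := @Pm _ _ _ hat fam al (fun c => c <= a) v.
have piE : forall a y, a <= al -> pi al a y = psi al (P a (phi al y)).
  move=> a' y ha; rewrite /sf_pi /P -ST_SF //.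
  rewrite -{1}((inv al).1 y) -psiN //.
  rewrite -[LHS](inv al).1 phiN // (inv a').2 //.
pose E c (v : S_obj hat fam al) := @Em _ _ _ hat fam al c v.
have sumE : forall (Q : pred A) v, \sum_(c <- hat al | Q c) E c v =
     @Pm _ _ _ hat fam al Q v.
  move=> Q v; apply/ffunP => c'; rewrite dsum_sum ffunE.
  rewrite (eq_bigr (fun c => if c == ssval c' then v c' else 0)); last first.
    by move=> c _; rewrite ffunE eq_sym.
  by rewrite sum_delta // ssvalP.
have Es : forall c y, c <= al -> s c y = psi al (E c (phi al y)).
  move=> c y hc.
  have H1 := s_unique hat_uniq hat_spec (t:=s) (x:=y) (lexx al).
  rewrite H1 //; last by move=> b' hb'; apply: ssum.
  have H2 := s_unique hat_uniq hat_spec (t:=fun c y => psi al (E c (phi al y))) (x:=y) (lexx al).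
  rewrite H2 //.
  move=> b' hb'; rewrite -(lin_sum (psil al)) piE //; congr (psi al _); symmetry; exact: sumE.
rewrite big_seq_cond (eq_bigr (fun c => psi al (E c (phi al x)))); last first.
  by move=> c /andP[]; rewrite hat_spec => hc _; apply: Es.
rewrite -big_seq_cond -(lin_sum (psil al)) sumE piE // piE // (inv al).2; congr (psi al _).
by apply/ffunP => c; rewrite !ffunE; case: ifP => //; case: ifP.
Qed.
End Dec.

Section Kfix.
Variables (R : comPzRingType) (M : lmodType R) (e : M -> M).
Definition Kfix (He : linear e) : Type := {x : M | e x == x}.
Variable He : linear e.
HB.instance Definition _ := Choice.on (Kfix He).

Lemma keq (p q : Kfix He) : sval p = sval q -> p = q.
Proof.
case: p q => [x hx] [y hy] /= E; subst y; congr exist; exact: bool_irrelevance.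
Qed.

Fact k0P : e 0 == 0. Proof. by rewrite (lin0 He). Qed.
Definition kzero : Kfix He := exist (fun x => e x == x) 0 k0P.
Fact kaddP (p q : Kfix He) : e (sval p + sval q) == sval p + sval q.
Proof. by rewrite (linD He) (eqP (svalP p)) (eqP (svalP q)). Qed.
Definition kadd p q : Kfix He := exist (fun x => e x == x) _ (kaddP p q).
Fact koppP (p : Kfix He) : e (- sval p) == - sval p.
Proof. by rewrite (linN He) (eqP (svalP p)). Qed.
Definition kopp p : Kfix He := exist (fun x => e x == x) _ (koppP p).
Fact kscaleP k (p : Kfix He) : e (k *: sval p) == k *: sval p.
Proof. by rewrite (linZ He) (eqP (svalP p)). Qed.
Definition kscale k p : Kfix He := exist (fun x => e x == x) _ (kscaleP k p).

Fact kaddA : associative kadd.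
Proof. by move=> p q r; apply: keq; rewrite /= addrA. Qed.
Fact kaddC : commutative kadd.
Proof. by move=> p q; apply: keq; rewrite /= addrC. Qed.
Fact kadd0 : left_id kzero kadd.
Proof. by move=> p; apply: keq; rewrite /= add0r. Qed.
Fact kaddN : left_inverse kzero kopp kadd.
Proof. by move=> p; apply: keq; rewrite /= addNr. Qed.
HB.instance Definition _ := GRing.isZmodule.Build (Kfix He) kaddA kaddC kadd0 kaddN.
Fact kscaleA a b v : kscale a (kscale b v) = kscale (a * b) v.
Proof. by apply: keq; rewrite /= scalerA. Qed.
Fact kscale1 : left_id 1 kscale.
Proof. by move=> p; apply: keq; rewrite /= scale1r. Qed.
Fact kscaleDr : right_distributive kscale +%R.
Proof. by move=> a p q; apply: keq; rewrite /= scalerDr. Qed.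
Fact kscaleDl v : {morph kscale^~ v : a b / a + b}.
Proof. by move=> a b; apply: keq; rewrite /= scalerDl. Qed.
HB.instance Definition _ :=
  GRing.Zmodule_isLmodule.Build R (Kfix He) kscaleA kscale1 kscaleDr kscaleDl.

Lemma kvalD (p q : Kfix He) : sval (p + q) = sval p + sval q. Proof. by []. Qed.
Lemma kvalZ k (p : Kfix He) : sval (k *: p) = k *: sval p. Proof. by []. Qed.
Lemma kval0 : sval (0 : Kfix He) = 0. Proof. by []. Qed.
End Kfix.


Section Cons.
Variables (R : comPzRingType) (d : Order.disp_t) (A : porderType d)
    (hat : A -> seq A)
    (hat_uniq : forall a : A, uniq (hat a))
    (hat_spec : forall a b : A, (b \in hat a) = (b <= a))
    (X : split_functor R A) (HX : is_split X).
Hypothesis HIP : intersection_property hat X.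

Local Notation G := (sf_G X).
Local Notation F := (sf_F X).
Local Notation pi al := (@sf_pi _ _ _ X al).
Local Notation s al := (@smob _ _ _ hat X al).
Let srec := s_rec hat_uniq hat_spec (X:=X).
Let splitle := split_le hat_uniq hat_spec.
Let shl := size_hat_lt hat_uniq hat_spec.

Lemma slin al a : a <= al -> linear (s al a).
Proof. exact: s_lin. Qed.

Lemma ssum al a x : a <= al -> pi al a x = \sum_(b <- hat al | b <= a) s al b x.
Proof. exact: s_sum. Qed.

Lemma IPs al a b x : a <= al -> b <= al ->
  pi al a (pi al b x) = \sum_(c <- hat al | (c <= a) && (c <= b)) s al c x.
Proof.
move=> aal bal; apply: (HIP (s := s al)) => //.
- by move=> c hc; apply: slin.
- by move=> c hc y; apply: ssum.
Qed.

Lemma pi_s al a b x : a <= al -> b <= al ->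
  pi al a (s al b x) = if b <= a then s al b x else 0.
Proof.
move=> aal; move: {2}(size (hat b)).+1 (ltnSn (size (hat b))) => n.
elim: n b => [//|n IH] b hn bal.
rewrite [in LHS]srec (linB (pi_lin HX aal)) IPs // (lin_sum (pi_lin HX aal)).
rewrite (eq_bigl (fun c => (c <= b) && (c <= a))); last by move=> c; rewrite andbC.
rewrite big_mkcondr (splitle _ bal).
rewrite big_seq_cond [X in _ - X]big_seq_cond.
rewrite (eq_bigr (fun c => pi al a (s al c x))) ?addrK //.
move=> c /andP[_ cb]; rewrite IH //; last exact: le_trans (ltW cb) bal.
by apply: leq_trans (shl cb) _; rewrite -ltnS.
Qed.

Lemma s_s al a b x : a <= al -> b <= al ->
  s al a (s al b x) = if a == b then s al b x else 0.
Proof.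
move=> + bal; move: {2}(size (hat a)).+1 (ltnSn (size (hat a))) => n.
elim: n a => [//|n IH] a hn aal.
rewrite [in LHS]srec pi_s //.
rewrite big_seq_cond (eq_bigr (fun c => if c == b then s al b x else 0)); last first.
  move=> c /andP[_ ca]; rewrite IH //; last exact: le_trans (ltW ca) aal.
  by apply: leq_trans (shl ca) _; rewrite -ltnS.
rewrite -big_seq_cond (sum_delta (fun c => c < a) b (fun _ => s al b x)) //.
rewrite hat_spec bal /= lt_neqAle eq_sym.
by case: eqP => [->|_] /=; rewrite ?lexx ?subr0 //; case: ifP; rewrite ?subrr ?subr0.
Qed.

Lemma s_pi al c b x : c <= al -> b <= al ->
  s al c (pi al b x) = if c <= b then s al c x else 0.
Proof.
move=> cal bal; rewrite (ssum x bal) (lin_sum (slin cal)).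
rewrite big_seq_cond (eq_bigr (fun b' => if b' == c then s al b' x else 0)); last first.
  by move=> b' /andP[]; rewrite hat_spec => b'al _; rewrite s_s // eq_sym.
by rewrite -big_seq_cond sum_delta // hat_spec cal.
Qed.

Lemma sL a c x : c <= a -> s a c x = G c a (s c c (F a c x)).
Proof.
move=> ca; symmetry.
apply: (s_unique hat_uniq hat_spec
   (t := fun b y => G c a (s c b (F a c y))) (x := x) ca) => // b bc.
rewrite -(lin_sum (HGl HX ca)).
rewrite (@sum_list_eq _ _ (hat a) (hat c) (fun b' => b' <= b)) //; last first.
  by move=> y yb; rewrite !hat_spec (le_trans yb bc) (le_trans yb (le_trans bc ca)).
rewrite -ssum // /sf_pi -(HGc HX bc ca) -(HFc HX bc ca) //.
Qed.

Lemma sF a c x : c <= a -> s c c (F a c x) = F a c (s a c x).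
Proof. by move=> ca; rewrite (sL _ ca) (HFG HX ca). Qed.

Lemma Gs a c y : c <= a -> s c c y = y -> G c a y = s a c (G c a y).
Proof. by move=> ca hy; rewrite [in RHS](sL _ ca) (HFG HX ca) hy. Qed.

Lemma piG a b x : b <= a -> pi a b (G b a x) = G b a x.
Proof. by move=> ba; rewrite /sf_pi (HFG HX ba). Qed.

Lemma Fpi a b y : b <= a -> F a b (pi a b y) = F a b y.
Proof. by move=> ba; rewrite /sf_pi (HFG HX ba). Qed.

Definition Kc (c : A) : lmodType R := Kfix (slin (lexx c)).

Definition fam (c : A) : split_functor R A :=
  SplitFunctor (fun _ => Kc c) (fun _ _ => id) (fun _ _ => id).

Lemma fam_core c : is_core_split (fam c).
Proof.
split; last by move=> b a _; exists id.
by split => //; move=> *.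
Qed.

Lemma kval c (p : Kc c) : s c c (sval p) = sval p.
Proof. exact: (eqP (svalP p)). Qed.

Fact mkKP c (y : sf_obj X c) : s c c (s c c y) == s c c y.
Proof. by rewrite s_s // eqxx. Qed.
Definition mkK c (y : sf_obj X c) : Kc c := exist (fun z => s c c z == z) _ (@mkKP c y).

Definition phi a (x : sf_obj X a) : S_obj hat fam a :=
  [ffun c : seq_sub (hat a) => @mkK (ssval c) (F a (ssval c) x)].

Definition psi a (v : S_obj hat fam a) : sf_obj X a :=
  \sum_(c <- hat a) G c a (sval (dget v c)).

Lemma phiE a x (c : seq_sub (hat a)) : sval (phi x c) = s (ssval c) (ssval c) (F a (ssval c) x).
Proof. by rewrite ffunE. Qed.

Lemma dget_phi a x c : c \in hat a -> sval (dget (phi x) c) = s c c (F a c x).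
Proof. by move=> H; rewrite (dget_in _ H) ffunE. Qed.

Lemma inA a (c : seq_sub (hat a)) : ssval c <= a.
Proof. by rewrite -hat_spec ssvalP. Qed.

Lemma phi_lin a : linear (@phi a).
Proof.
move=> k u v; apply/ffunP => c; apply: keq; rewrite /phi !ffunE /=.
by rewrite (HFl HX (inA c)) (slin (lexx _)).
Qed.

Lemma psi_lin a : linear (@psi a).
Proof.
move=> k u v; rewrite /psi scaler_sumr -big_split /=.
rewrite big_seq [RHS]big_seq; apply: eq_bigr => c hc.
by rewrite !(dget_in _ hc) !ffunE /= (HGl HX (_ : c <= a)) // -hat_spec.
Qed.

Lemma natG b a x : b <= a ->
  @phi a (G b a x) = sf_G (ST_functor hat fam) b a (@phi b x).
Proof.
move=> ba; apply/ffunP => c; rewrite /= /S_map /phi !ffunE.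
have ca := inA c.
case: ifP => cb; apply: keq => /=.
  have H : ssval c \in hat b by rewrite hat_spec.
  by rewrite (dget_in _ H) ffunE /= (HFc HX cb ba) (HFG HX ba).
by rewrite (sF _ ca) -(piG x ba) s_pi // cb (lin0 (HFl HX ca)).
Qed.

Lemma FG_term a b c (w : sf_obj X c) : b <= a -> c <= a -> s c c w = w ->
  F a b (G c a w) = if c <= b then G c b w else 0.
Proof.
move=> ba ca hw; case: ifP => cb.
  by rewrite (HGc HX cb ba) (HFG HX ba).
by rewrite (Gs ca hw) -(Fpi _ ba) pi_s // cb (lin0 (HFl HX ba)).
Qed.

Lemma natF b a v : b <= a ->
  @psi b (sf_F (ST_functor hat fam) a b v) = F a b (@psi a v).
Proof.
move=> ba; rewrite /psi (lin_sum (HFl HX ba)).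
rewrite big_seq (eq_bigr (fun c => G c b (sval (dget v c)))); last first.
  move=> c hc; rewrite (dget_in _ hc) /= ffunE /=.
  have hca : c \in hat a by rewrite hat_spec (le_trans _ ba) // -hat_spec.
  by rewrite (dget_in _ hca).
rewrite [RHS]big_seq [RHS](eq_bigr (fun c => if c <= b then G c b (sval (dget v c)) else 0)); last first.
  move=> c hc.
  apply: FG_term => //; first by rewrite -hat_spec.
  exact: kval.
rewrite -[RHS]big_seq -[RHS]big_mkcond /=.
rewrite (@sum_list_eq _ _ (hat a) (hat b) (fun c => c <= b)) //; last first.
  by move=> y yb; rewrite !hat_spec yb (le_trans yb ba).
by apply: eq_bigl => c; rewrite hat_spec.
Qed.

Lemma inv1 a (x : sf_obj X a) : @psi a (@phi a x) = x.
Proof.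
rewrite /psi big_seq (eq_bigr (fun c => s a c x)); last first.
  move=> c hc; have ca : c <= a by rewrite -hat_spec.
  by rewrite dget_phi // (sL _ ca).
rewrite -big_seq; transitivity (pi a a x); last by rewrite /sf_pi (HF1 HX) (HG1 HX).
rewrite (ssum x (lexx a)) [RHS]big_seq_cond [LHS]big_seq; apply: eq_bigl => c.
by rewrite hat_spec andbb.
Qed.

Lemma inv2 a (v : S_obj hat fam a) : @phi a (@psi a v) = v.
Proof.
apply/ffunP => c; apply: keq; rewrite /phi ffunE /=.
have ca := inA c.
rewrite (sF _ ca) /psi (lin_sum (slin ca)).
rewrite big_seq (eq_bigr (fun c' => if c' == ssval c then G c' a (sval (dget v c')) else 0)).
  rewrite -big_seq (sum_delta predT) // ssvalP /= (HFG HX ca).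
  by rewrite dget_val.
move=> c' hc'; have c'a : c' <= a by rewrite -hat_spec.
rewrite [G c' a _](Gs c'a (kval _)) s_s // eq_sym.
by case: eqP => // ->; rewrite -(Gs ca (kval _)).
Qed.

Lemma IP_dec : decomposable hat X.
Proof.
exists fam; split; first exact: fam_core.
exists (@phi), (@psi); split.
- exact: phi_lin.
- exact: psi_lin.
- by move=> b a ba x; apply: natG.
- by move=> b a ba y; apply: natF.
- by move=> a; split => [x|v]; [apply: inv1 | apply: inv2].
Qed.
End Cons.

Theorem theorem4 (R : comPzRingType) (d : Order.disp_t) (A : porderType d)
    (hat : A -> seq A)
    (hat_uniq : forall a : A, uniq (hat a))
    (hat_spec : forall a b : A, (b \in hat a) = (b <= a))
    (X : split_functor R A) (HX : is_split X) :
  intersection_property hat X <-> decomposable hat X.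
Proof.
split; first exact: IP_dec.
by case=> fam [Hfam Hiso]; apply: (dec_IP hat_uniq hat_spec Hfam Hiso).
Qed.
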